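(* For every tree $T=(V,E)$ of order at least $3$, $$\sum_{uv\in E}|d(u)-d(v)| \;\ge\; \sum_{v\in V}(d(v)-2)^2 + 2(\Delta(T)-2).$$
   Context: $d(v)$ denotes the degree of a vertex $v$ in $T$, and $\Delta(T)$ is the maximum degree of $T$. *)

(* Defs.v *)
From mathcomp Require Import all_boot all_order all_algebra.
Set Implicit Arguments. Unset Strict Implicit. Unset Printing Implicit Defensive.

Definition simple_graph (T : finType) (e : rel T) : Prop :=
  symmetric e /\ irreflexive e.

Definition edges (T : finType) (e : rel T) : {set {set T}} :=
  [set [set u; v] | u in T, v in T & e u v].

Definition deg (T : finType) (e : rel T) (v : T) : nat := #|[set u | e v u]|.

Definition maxdeg (T : finType) (e : rel T) : nat := \max_(v : T) deg e v.

Definition is_tree (T : finType) (e : rel T) : Prop :=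
  [/\ simple_graph e, (forall u v : T, connect e u v) & #|edges e| = #|T|.-1].

(* For f = {u,v} (two elements), max - min of the two degrees = |d(u) - d(v)|. *)
Definition edge_irr (T : finType) (e : rel T) (f : {set T}) : nat :=
  (\max_(u in f) deg e u) - \big[minn/maxdeg e]_(u in f) deg e u.

(* Main.v *)
Require Import Defs.
From mathcomp Require Import all_boot all_order all_algebra zify.
Import GRing.Theory Num.Theory.
Set Implicit Arguments. Unset Strict Implicit. Unset Printing Implicit Defensive.
Lemma parent_exists (T : finType) (e : rel T) (r : T) :
  (forall v, connect e v r) ->
  exists (par : T -> T) (dist : T -> nat),
    forall v, v != r -> e v (par v) && (dist (par v) < dist v).
Proof.
move=> hc.
have hex : forall v, exists k, [exists t : k.-tuple T, path e v t && (last v t == r)].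
  move=> v; have /connectP[p pp lp] := hc v.
  exists (size p); apply/existsP; exists (in_tuple p) => /=.
  by rewrite pp -lp eqxx.
pose dist v := ex_minn (hex v).
have step : forall v, v != r -> exists u, e v u && (dist u < dist v).
  move=> v vr; rewrite /dist; case: (ex_minnP (hex v)) => k /existsP[t /andP[pt lt]] _.
  case: t pt lt => [[|u s] /= sz]; first by move=> _ /eqP lt; rewrite lt eqxx in vr.
  move=> /andP[evu ps] ls; exists u; rewrite evu /=.
  case: (ex_minnP (hex u)) => k' _ min'; rewrite -(eqP sz) ltnS; apply: min'.
  by apply/existsP; exists (in_tuple s) => /=; rewrite ps ls.
exists (fun v => odflt r [pick u | e v u && (dist u < dist v)]), dist => v vr /=.
case: pickP => [u //|none]; have [u hu] := step v vr.
by rewrite none in hu.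
Qed.

Lemma bigmin_le (T : eqType) (r : seq T) (P : pred T) (F : T -> nat) m w :
  w \in r -> P w -> \big[minn/m]_(i <- r | P i) F i <= F w.
Proof.
elim: r => //= x r IH; rewrite inE big_cons => /orP[/eqP<- Pw|wr Pw].
  by rewrite Pw geq_minl.
by case: (P x); [rewrite geq_min IH ?orbT | exact: IH].
Qed.
Local Open Scope ring_scope.
Lemma castsum (I : finType) (P : pred I) (F : I -> nat) :
  \sum_(i | P i) (F i)%:Z = (\sum_(i | P i) F i)%N%:Z.
Proof. by rewrite (big_morph Posz PoszD (erefl (Posz 0))). Qed.
Lemma sq (d : nat) : ((d%:Z - 2) ^+ 2) = (d * d + 4)%N%:Z - (4 * d)%N%:Z.
Proof. rewrite expr2; lia. Qed.
Lemma c4 (T : finType) : (\sum_(v : T) 4 = 4 * #|T|)%N.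
Proof. by rewrite sum_nat_const mulnC. Qed.
Lemma fin (L X Y Q S n A D : nat) : (Y <= L + X)%N -> Q = (X + Y)%N -> S = (2 * A)%N -> S = (D + X)%N -> A = n.-1 -> (3 <= n)%N ->
  L%:Z >= ((Q + 4 * n)%N%:Z - (4 * S)%N%:Z) + 2 * (D%:Z - 2).
Proof. lia. Qed.

Theorem theorem4 (T : finType) (e : rel T) :
  is_tree e -> (3 <= #|T|)%N ->
  (\sum_(f in edges e) (edge_irr e f)%:Z)
    >= \sum_(v : T) ((deg e v)%:Z - 2) ^+ 2 + 2 * ((maxdeg e)%:Z - 2).
Proof.
move=> [[sym irr] conn cardE] n3.
have /card_gt0P[r0 _] : (0 < #|T|)%N by apply: leq_trans n3.
pose r := [arg max_(i > r0) deg e i].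
have hr : maxdeg e = deg e r by rewrite /maxdeg (bigmax_eq_arg r0).
have [par [dist hpar]] := parent_exists (fun v => conn v r).
pose A := [set~ r].
pose g v := [set v; par v].
have noboth : forall v u, v \in A -> u \in A -> u = par v -> v = par u -> False.
  move=> v u; rewrite !in_setC1 => /hpar/andP[_ h1] /hpar/andP[_ h2] E1 E2.
  by move: h1 h2; rewrite -E1 -E2 => h1 h2; have := ltn_trans h1 h2; rewrite ltnn.
have inj : {in A &, injective g}.
  move=> v w vA wA E.
  have : v \in g w by rewrite -E set21.
  rewrite !inE => /orP[/eqP //|/eqP vpw].
  have : w \in g v by rewrite E set21.
  rewrite !inE => /orP[/eqP //|/eqP wpv].
  by case: (noboth v w vA wA wpv vpw).
have sub : g @: A \subset edges e.
  apply/subsetP => f /imsetP[v vA ->].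
  move: vA; rewrite in_setC1 => /hpar/andP[evp _].
  by rewrite /edges; apply/imset2P; exists v (par v) => //; rewrite inE.
have eqE : edges e = g @: A.
  apply/esym/eqP; rewrite eqEcard sub /= cardE card_in_imset // cardsC1 //.
have arc : forall v u, e v u -> (((v \in A) && (u == par v)) + ((u \in A) && (v == par u)) = 1)%N.
  move=> v u evu.
  have : [set v; u] \in edges e by rewrite /edges; apply/imset2P; exists v u => //; rewrite inE.
  rewrite eqE => /imsetP[w wA E].
  have vu : v != u by apply/eqP => vu; rewrite vu irr in evu.
  have : v \in g w by rewrite -E set21.
  have : u \in g w by rewrite -E set22.
  have pA : forall x, x \in A -> (x \in A) = true by [].
  have wr : w != r by rewrite -in_setC1.
  rewrite !inE => /orP[]/eqP Eu /orP[]/eqP Ev; subst.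
  - by rewrite eqxx in vu.
  - rewrite wr eqxx addn1; case: (boolP (par w != r)) => //= pwr.
    case: (boolP (w == par (par w))) => // /eqP h.
    by case: (noboth _ _ wA (_ : par w \in A) (erefl _) h); rewrite in_setC1.
  - rewrite wr eqxx /=; case: (boolP (par w != r)) => //= pwr.
    case: (boolP (w == par (par w))) => // /eqP h.
    by case: (noboth _ _ wA (_ : par w \in A) (erefl _) h); rewrite in_setC1.
  - by rewrite eqxx in vu.
have dc : forall F : T -> T -> nat,
    (\sum_v \sum_(u | e v u) F v u = \sum_(w in A) (F w (par w) + F (par w) w))%N.
  move=> F.
  transitivity (\sum_v \sum_u (((v \in A) && (u == par v)) * F v u
                 + ((u \in A) && (v == par u)) * F v u))%N.
    apply: eq_bigr => v _; rewrite big_mkcond; apply: eq_bigr => u _.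
    case: (boolP (e v u)) => h; first by rewrite -mulnDl arc // mul1n.
    case: (boolP ((v \in A) && (u == par v))) => [/andP[vA /eqP Eu]|_].
      by move: vA; rewrite in_setC1 => /hpar/andP[hh _]; rewrite -Eu in hh; rewrite hh in h.
    case: (boolP ((u \in A) && (v == par u))) => [/andP[uA /eqP Ev]|_] //.
    by move: uA; rewrite in_setC1 => /hpar/andP[hh _]; rewrite -Ev sym in hh; rewrite hh in h.
  under eq_bigr => v _ do rewrite big_split /=.
  rewrite big_split /= [in RHS]big_split /=.
  congr (_ + _)%N.
    rewrite [RHS]big_mkcond; apply: eq_bigr => v _.
    rewrite (bigD1 (par v)) //= eqxx andbT big1 ?addn0.
      by case: (v \in A); rewrite ?mul1n ?mul0n.
    by move=> u /negbTE ->; rewrite andbF.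
  rewrite exchange_big [RHS]big_mkcond; apply: eq_bigr => u _.
  rewrite (bigD1 (par u)) //= eqxx andbT big1 ?addn0.
    by case: (u \in A); rewrite ?mul1n ?mul0n.
  by move=> v /negbTE ->; rewrite andbF.

have degE : forall v, deg e v = (\sum_(u | e v u) 1)%N.
  by move=> v; rewrite /deg -sum1_card; apply: eq_bigl => u; rewrite inE.
have hS : (\sum_v deg e v = 2 * #|A|)%N.
  by rewrite (eq_bigr _ (fun v _ => degE v)) dc sum_nat_const mulnC.
have hQ : (\sum_v deg e v * deg e v = \sum_(w in A) deg e w + \sum_(w in A) deg e (par w))%N.
  rewrite -big_split -(dc (fun v _ => deg e v)); apply: eq_bigr => v _.
  by rewrite {1}degE big_distrl /=; apply: eq_bigr => u _; rewrite mul1n.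
have hD : (\sum_v deg e v = deg e r + \sum_(w in A) deg e w)%N.
  by rewrite (bigD1 r) //=; congr (_ + _)%N; apply: eq_bigl => v; rewrite in_setC1.
have hL : (\sum_(w in A) deg e (par w) <= \sum_(w in A) edge_irr e (g w) + \sum_(w in A) deg e w)%N.
  rewrite -big_split; apply: leq_sum => w wA /=.
  have h1 : (deg e (par w) <= \max_(u in g w) deg e u)%N by apply: leq_bigmax_cond; rewrite set22.
  have h2 : (\big[minn/maxdeg e]_(u in g w) deg e u <= deg e w)%N.
    by apply: bigmin_le; [rewrite mem_index_enum | rewrite set21].
  move: h1 h2; rewrite /edge_irr; lia.
rewrite castsum eqE big_imset //= (eq_bigr _ (fun v _ => sq (deg e v))) sumrB !castsum.
rewrite big_split /= c4 -big_distrr /= hr.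
apply: fin hL hQ hS hD _ n3.
by rewrite cardsC1.
Qed.
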